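(* Let $G$ be a group with finite presentation $\mathcal P=\langle t,\mathcal A:\mathcal R,\ t^{-1}at=\phi(a)\ (a\in\mathcal A)\rangle$ of bounded depth $B\ge0$, $X$ its Cayley 2-complex and $P:X\to\mathbb R$ the level map. If $\alpha$ is an edge path loop in $X$ with $P(\alpha)\subset(-\infty,L]$, then $\alpha$ is homotopically trivial by a homotopy $H$ with $P(H)\subset(-\infty,L+B]$.
   Context: $\mathcal A$ is finite, $\mathcal R\subset F(\mathcal A)$ finite, $\phi:F(\mathcal A)\to F(\mathcal A)$ a homomorphism. Let $N_0$ be the normal closure in $F(\mathcal A)$ of $\bigcup_{j\ge0}\phi^j(\mathcal R)$ and $N^\infty=\bigcup_{i\ge0}\phi^{-i}(N_0)$; $\mathcal P$ has bounded depth $B$ if $N^\infty=\bigcup_{i=0}^B\phi^{-i}(N_0)$. $X$ is the simply connected 2-complex with vertex set $G$, 1-skeleton the Cayley graph with respect to $\mathcal A\cup\{t\}$, and 2-cells for relators. $P$ sends a vertex to the exponent sum of $t$ in it, each $\mathcal R$-cell to the level of its vertices, each conjugation 2-cell (boundary $a t\phi(a)^{-1}t^{-1}$, $a$-edge at level $L'$) onto $[L',L'+1]$, and $t$-edges linearly. *)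

(* Defs.v *)
From mathcomp Require Import all_boot all_order all_algebra.
Set Implicit Arguments. Unset Strict Implicit. Unset Printing Implicit Defensive.
Import Order.TTheory GRing.Theory Num.Theory.
Local Open Scope ring_scope.

(* A letter is (x, b): b = true means x, b = false means x^-1. *)
Definition word (X : Type) := seq (X * bool).

Definition inv_letter (X : Type) (l : X * bool) : X * bool := (l.1, ~~ l.2).
Definition winv (X : Type) (w : word X) : word X := rev (map (@inv_letter X) w).

Definition reduce (X : eqType) (w : word X) : word X :=
  foldr (fun l acc => match acc with
                      | l' :: acc' => if l' == inv_letter l then acc' else l :: acc
                      | [::] => [:: l]
                      end) [::] w.

(* w lies in the normal closure in F(X) of the set S of words:
   w is freely equal to a product of conjugates u s^{+-1} u^-1, s in S *)
Definition in_nclosure (X : eqType) (S : word X -> Prop) (w : word X) : Prop :=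
  exists s : seq (word X * word X * bool),
    (forall e, e \in s -> S e.1.2) /\
    reduce w = reduce (flatten (map (fun e : word X * word X * bool =>
        e.1.1 ++ (if e.2 then e.1.2 else winv e.1.2) ++ winv e.1.1) s)).

(* a homomorphism F(A) -> F(A) is given by the images of the generators *)
Definition phiw (A : Type) (phi : A -> word A) (w : word A) : word A :=
  flatten (map (fun l : A * bool => if l.2 then phi l.1 else winv (phi l.1)) w).

Definition N0 (A : eqType) (R : seq (word A)) (phi : A -> word A) (w : word A) :=
  in_nclosure (fun r => exists j, exists2 r0, r0 \in R & r = iter j (phiw phi) r0) w.

Definition Ninf (A : eqType) (R : seq (word A)) (phi : A -> word A) (w : word A) :=
  exists i, N0 R phi (iter i (phiw phi) w).

Definition bounded_depth (A : eqType) (R : seq (word A)) (phi : A -> word A)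
    (B : nat) : Prop :=
  forall w, Ninf R phi w -> exists2 i, (i <= B)%N & N0 R phi (iter i (phiw phi) w).

(* generators of G : A + {t};  None is t *)
Definition tlet (b : bool) (A : Type) : option A * bool := (None, b).
Definition lift (A : Type) (w : word A) : word (option A) :=
  map (fun l : A * bool => (Some l.1, l.2)) w.

(* boundary words of the 2-cells of X (read from a base vertex):
   R-cells, and conjugation cells with boundary a t phi(a)^-1 t^-1 *)
Definition cells (A : finType) (R : seq (word A)) (phi : A -> word A)
    : seq (word (option A)) :=
  map (@lift A) R ++
  [seq [:: (Some a, true); tlet true A] ++ winv (lift (phi a)) ++ [:: tlet false A]
  | a <- enum A].

(* w (read from any vertex g) is a loop in X iff w = 1 in G *)
Definition is_loop (A : finType) (R : seq (word A)) (phi : A -> word A)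
    (w : word (option A)) : Prop :=
  in_nclosure (fun r => r \in cells R phi) w.

Definition tsum (A : Type) (w : word (option A)) : int :=
  \sum_(l <- w) (if l.1 is None then (if l.2 then 1 else -1) else 0%R).

(* all vertices of the edge path reading w from a vertex of level p
   have level P <= M *)
Definition levels_le (A : Type) (p : int) (w : word (option A)) (M : int) : Prop :=
  forall k, (k <= size w)%N -> p + tsum (take k w) <= M.

(* elementary homotopy move of an edge path inside P^{-1}(-oo, M]:
   insert a backtrack x x^-1, or the boundary of a 2-cell (any starting
   point, either orientation); both paths must lie in levels <= M
   (then so does the elementary homotopy, including the 2-cell) *)
Definition elem_move (A : finType) (R : seq (word A)) (phi : A -> word A)
    (M p : int) (w w' : word (option A)) : Prop :=
  levels_le p w M /\ levels_le p w' M /\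
  exists u v c, w = u ++ v /\ w' = u ++ c ++ v /\
    ((exists x, c = [:: x; inv_letter x]) \/
     (exists2 r, r \in cells R phi & exists k, c = rot k r \/ c = rot k (winv r))).

Inductive homotopic_within (A : finType) (R : seq (word A)) (phi : A -> word A)
    (M p : int) : word (option A) -> word (option A) -> Prop :=
| hw_refl w : homotopic_within R phi M p w w
| hw_fwd w1 w2 w3 : elem_move R phi M p w1 w2 ->
    homotopic_within R phi M p w2 w3 -> homotopic_within R phi M p w1 w3
| hw_bwd w1 w2 w3 : elem_move R phi M p w2 w1 ->
    homotopic_within R phi M p w2 w3 -> homotopic_within R phi M p w1 w3.

(* Main.v *)
Require Import Defs.
From mathcomp Require Import all_boot all_order all_algebra.
From mathcomp Require Import zify.
Require Import Defs.
Set Implicit Arguments. Unset Strict Implicit. Unset Printing Implicit Defensive.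
Import Order.TTheory GRing.Theory Num.Theory.
Local Open Scope ring_scope.

Section Words.
Variable X : Type.
Lemma inv_letterK : involutive (@inv_letter X).
Proof. by case=> x b; rewrite /inv_letter /= negbK. Qed.
Lemma winv_cons (l : X * bool) w : winv (l :: w) = winv w ++ [:: inv_letter l].
Proof. by rewrite /winv /= rev_cons -cats1. Qed.
Lemma winv_cat (u v : word X) : winv (u ++ v) = winv v ++ winv u.
Proof. by rewrite /winv map_cat rev_cat. Qed.
Lemma winvK : involutive (@winv X).
Proof.
move=> w; rewrite /winv map_rev revK -map_comp.
by rewrite (@eq_map _ _ _ id) ?map_id // => l /=; rewrite inv_letterK.
Qed.
End Words.

Section Phi.
Variables (A : Type) (phi : A -> word A).
Lemma phiw_cat u v : phiw phi (u ++ v) = phiw phi u ++ phiw phi v.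
Proof. by rewrite /phiw map_cat flatten_cat. Qed.
Lemma phiw_cons l u : phiw phi (l :: u) = phiw phi [:: l] ++ phiw phi u.
Proof. by rewrite -phiw_cat. Qed.
Lemma phiw_winv w : phiw phi (winv w) = winv (phiw phi w).
Proof.
elim: w => [//|[a b] w IH].
rewrite winv_cons phiw_cat IH phiw_cons winv_cat; congr (_ ++ _).
by rewrite /phiw /= !cats0; case: b => //=; rewrite winvK.
Qed.
Lemma iter_phiw_cat k u v :
  iter k (phiw phi) (u ++ v) = iter k (phiw phi) u ++ iter k (phiw phi) v.
Proof. by elim: k => //= k ->; rewrite phiw_cat. Qed.
Lemma iter_phiw_winv k w : iter k (phiw phi) (winv w) = winv (iter k (phiw phi) w).
Proof. by elim: k => //= k ->; rewrite phiw_winv. Qed.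

Lemma lift_cat (u v : word A) : lift (u ++ v) = lift u ++ lift v.
Proof. by rewrite /lift map_cat. Qed.
Lemma lift_winv (u : word A) : lift (winv u) = winv (lift u).
Proof. by rewrite /lift /winv map_rev -!map_comp; congr rev; apply: eq_map => -[]. Qed.

Definition step (l : option A * bool) : int :=
  if l.1 is None then (if l.2 then 1 else -1) else 0.
Lemma tsum_nil : tsum ([::] : word (option A)) = 0 :> int. Proof. by rewrite /tsum big_nil. Qed.
Lemma tsum_cons (l : option A * bool) (w : word (option A)) : tsum (l :: w) = step l + tsum w.
Proof. by rewrite /tsum big_cons. Qed.
Lemma tsum_cat (u v : word (option A)) : tsum (u ++ v) = tsum u + tsum v.
Proof. by rewrite /tsum big_cat. Qed.
Lemma step_inv l : step (inv_letter l) = - step l.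
Proof. by case: l => [[a|] [|]]; rewrite /step /= ?oppr0 ?opprK. Qed.
Lemma tsum_winv (w : word (option A)) : tsum (winv w) = - tsum w.
Proof.
elim: w => [|l w IH]; first by rewrite tsum_nil oppr0.
by rewrite winv_cons tsum_cat IH tsum_cons tsum_cons tsum_nil step_inv addr0 opprD addrC.
Qed.
Lemma tsum_lift (x : word A) : tsum (lift x) = 0.
Proof. by elim: x => [|l x IH]; rewrite ?tsum_nil // /lift /= tsum_cons IH. Qed.
Lemma tsum_rot k (w : word (option A)) : tsum (rot k w) = tsum w.
Proof. by rewrite /rot tsum_cat addrC -tsum_cat cat_take_drop. Qed.

Definition tP (n : nat) : word (option A) := nseq n (None, true).
Definition tN (n : nat) : word (option A) := nseq n (None, false).
Lemma tsum_tP n : tsum (tP n) = n%:Z.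
Proof. elim: n => [|n IH]; rewrite ?tsum_nil // /tP /= tsum_cons IH /step /=; lia. Qed.
Lemma tsum_tN n : tsum (tN n) = - n%:Z.
Proof. elim: n => [|n IH]; rewrite ?tsum_nil // /tN /= tsum_cons IH /step /=; lia. Qed.
Lemma winv_tP n : winv (tP n) = tN n.
Proof. by rewrite /winv /tP /tN map_nseq rev_nseq. Qed.
Lemma winv_tN n : winv (tN n) = tP n.
Proof. by rewrite -winv_tP winvK. Qed.

Lemma levels_nilE p N : levels_le p ([::] : word (option A)) N -> p <= N.
Proof. by move/(_ 0%N (leqnn _)); rewrite /= tsum_nil addr0. Qed.
Lemma levels_nilI p N : p <= N -> levels_le p ([::] : word (option A)) N.
Proof. by move=> h [|k] //= _; rewrite tsum_nil addr0. Qed.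
Lemma levels_consE p N l (w : word (option A)) : levels_le p (l :: w) N ->
  p <= N /\ levels_le (p + step l) w N.
Proof.
move=> h; split; first by have := h 0%N isT; rewrite /= tsum_nil addr0.
by move=> k hk; have := h k.+1 hk; rewrite /= tsum_cons addrA.
Qed.
Lemma levels_consI p N l (w : word (option A)) : p <= N -> levels_le (p + step l) w N ->
  levels_le p (l :: w) N.
Proof.
move=> h1 h2 [|k] /= hk; first by rewrite tsum_nil addr0.
by rewrite tsum_cons addrA; apply: h2.
Qed.
Lemma levels_catE p N (u v : word (option A)) : levels_le p (u ++ v) N ->
  levels_le p u N /\ levels_le (p + tsum u) v N.
Proof.
elim: u p => [|l u IH] p /=.
  move=> h; split; last by rewrite tsum_nil addr0.
  by apply: levels_nilI; have := h 0%N isT; rewrite take0 tsum_nil addr0.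
move/levels_consE=> [h1 /IH [h2 h3]]; split; first exact: levels_consI.
by rewrite tsum_cons addrA.
Qed.
Lemma levels_catI p N (u v : word (option A)) :
  levels_le p u N -> levels_le (p + tsum u) v N -> levels_le p (u ++ v) N.
Proof.
elim: u p => [|l u IH] p /=; first by rewrite tsum_nil addr0.
move/levels_consE=> [h1 h2] h3; apply: levels_consI => //; apply: IH => //.
by rewrite -addrA -tsum_cons.
Qed.
Lemma levels_liftI p N (x : word A) : p <= N -> levels_le p (lift x) N.
Proof.
move=> h; elim: x => [|l x IH]; first exact: levels_nilI.
by apply: levels_consI => //; rewrite /step /= addr0.
Qed.
Lemma levels_winvliftI p N (x : word A) : p <= N -> levels_le p (winv (lift x)) N.
Proof. by rewrite -lift_winv; apply: levels_liftI. Qed.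
Lemma levels_tPI p N n : p + n%:Z <= N -> levels_le p (tP n) N.
Proof.
elim: n p => [|n IH] p h; first by apply: levels_nilI; lia.
apply: levels_consI; first lia.
by apply: IH; rewrite /step /=; lia.
Qed.
Lemma levels_tNI p N n : p <= N -> levels_le p (tN n) N.
Proof.
elim: n p => [|n IH] p h; first exact: levels_nilI.
apply: levels_consI => //; apply: IH; rewrite /step /=; lia.
Qed.
End Phi.

Section Reduce.
Variable X : eqType.
Implicit Types (u v w s x : word X) (l : X * bool).
Definition push (l : X * bool) (acc : word X) : word X :=
  match acc with
  | l' :: acc' => if l' == inv_letter l then acc' else l :: acc
  | [::] => [:: l]
  end.
Lemma reduce_cons l w : reduce (l :: w) = push l (reduce w).
Proof. by []. Qed.
Lemma reduce_cat u v : reduce (u ++ v) = foldr push (reduce v) u.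
Proof. by rewrite /reduce foldr_cat. Qed.
Lemma reduce_catr u (v1 v2 : word X) : reduce v1 = reduce v2 -> reduce (u ++ v1) = reduce (u ++ v2).
Proof. by rewrite !reduce_cat => ->. Qed.
Fixpoint reduced (s : word X) : bool :=
  match s with
  | x :: ((y :: _) as s') => (y != inv_letter x) && reduced s'
  | _ => true
  end.
Lemma push_reduced l s : reduced s -> reduced (push l s).
Proof.
case: s => [//|m s] /=; case: ifP => // /eqP e.
  by case: s => [//|y s] /andP [].
move=> h; rewrite /= h andbT; apply/eqP => E; move: e; rewrite E //.
Qed.
Lemma reduced_reduce w : reduced (reduce w).
Proof. by elim: w => [//|l w IH]; rewrite reduce_cons push_reduced. Qed.
Lemma push_cancel l s : reduced s -> push l (push (inv_letter l) s) = s.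
Proof.
case: s => [|m s] /=; first by rewrite eqxx.
rewrite inv_letterK; case: (eqVneq m l) => [->|ne].
  case: s => [//|m' s] /= /andP [h _]; by rewrite (negbTE h).
by rewrite /= eqxx.
Qed.
Lemma reduce_bt l v : reduce (l :: inv_letter l :: v) = reduce v.
Proof.
rewrite !reduce_cons push_cancel //; exact: reduced_reduce.
Qed.
Lemma reduce_XX (x s : word X) : reduce (x ++ winv x ++ s) = reduce s.
Proof.
elim: x s => [//|l x IH] s.
rewrite winv_cons -catA cat_cons reduce_cons IH -reduce_cons.
by rewrite reduce_bt.
Qed.
End Reduce.

Section Hom.
Variables (A : finType) (R : seq (word A)) (phi : A -> word A).
Local Notation hw := (homotopic_within R phi).
Local Notation W := (word (option A)).
Implicit Types (u v w x y z c : W).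
Local Notation tP := (@tP A).
Local Notation tN := (@tN A).

Lemma hw_trans N p x y z : hw N p x y -> hw N p y z -> hw N p x z.
Proof.
elim=> [//|w1 w2 w3 e _ IH|w1 w2 w3 e _ IH] h.
  exact: hw_fwd e (IH h).
exact: hw_bwd e (IH h).
Qed.

Lemma hw_sym N p x y : hw N p x y -> hw N p y x.
Proof.
elim=> [w|w1 w2 w3 e _ IH|w1 w2 w3 e _ IH]; first exact: hw_refl.
  by apply: hw_trans IH _; apply: hw_bwd e (hw_refl _ _ _ _ _).
by apply: hw_trans IH _; apply: hw_fwd e (hw_refl _ _ _ _ _).
Qed.

Lemma cell_tsum r : r \in cells R phi -> tsum r = 0.
Proof.
rewrite mem_cat => /orP [/mapP [r0 _ ->]|/mapP [a _ ->]]; first exact: tsum_lift.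
rewrite !tsum_cat tsum_winv tsum_lift !tsum_cons !tsum_nil /step /=; lia.
Qed.

Definition okc (c : W) := (exists l : option A * bool, c = [:: l; inv_letter l]) \/
     (exists2 r, r \in cells R phi & exists k, c = rot k r \/ c = rot k (winv r)).

Lemma okc_tsum c : okc c -> tsum c = 0.
Proof.
case=> [[x ->]|[r /cell_tsum h [k [->|->]]]].
  by rewrite !tsum_cons tsum_nil step_inv; lia.
  by rewrite tsum_rot.
by rewrite tsum_rot tsum_winv h oppr0.
Qed.

Lemma elem_tsum N p w w' : elem_move R phi N p w w' -> tsum w' = tsum w.
Proof.
move=> [_ [_ [u [v [c [-> [-> h]]]]]]].
by rewrite !tsum_cat (okc_tsum h) add0r.
Qed.

Lemma levels_mid p N u z v : levels_le p (u ++ z ++ v) N -> tsum z = 0 ->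
  levels_le p (u ++ v) N.
Proof.
move=> /levels_catE [h1 /levels_catE [_ h2]] h0.
by apply: levels_catI => //; rewrite h0 addr0 in h2.
Qed.

Lemma levels_midI p N u z v : levels_le p (u ++ v) N -> tsum z = 0 ->
  levels_le (p + tsum u) z N -> levels_le p (u ++ z ++ v) N.
Proof.
move=> /levels_catE [h1 h2] h0 h3.
by apply: levels_catI => //; apply: levels_catI => //; rewrite h0 addr0.
Qed.

Lemma elem_frame N p u v w1 w2 : elem_move R phi N (p + tsum u) w1 w2 ->
  levels_le p u N -> levels_le (p + tsum u + tsum w1) v N ->
  elem_move R phi N p (u ++ w1 ++ v) (u ++ w2 ++ v).
Proof.
move=> e hu hv; have et := elem_tsum e.
case: e => [l1 [l2 [u0 [v0 [c [E1 [E2 hc]]]]]]].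
split; first by apply: levels_catI => //; apply: levels_catI.
split; first by apply: levels_catI => //; apply: levels_catI; rewrite ?et.
exists (u ++ u0), (v0 ++ v), c; rewrite E1 E2 !catA; split=> //; split=> //.
Qed.

Lemma hw_frame N p u v x y : hw N (p + tsum u) x y ->
  levels_le p u N -> levels_le (p + tsum u + tsum x) v N ->
  hw N p (u ++ x ++ v) (u ++ y ++ v).
Proof.
move=> h hu; elim: h => [w|w1 w2 w3 e _ IH|w1 w2 w3 e _ IH] hv.
- exact: hw_refl.
- apply: hw_fwd (elem_frame e hu hv) _; apply: IH.
  by rewrite (elem_tsum e).
- have hv' : levels_le (p + tsum u + tsum w2) v N by rewrite -(elem_tsum e).
  exact: hw_bwd (elem_frame e hu hv') (IH hv').
Qed.

Lemma hw_del N p u c v : okc c -> levels_le p (u ++ c ++ v) N ->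
  hw N p (u ++ c ++ v) (u ++ v).
Proof.
move=> hc h; apply: (hw_bwd _ (hw_refl _ _ _ _ _)).
split; first exact: levels_mid h (okc_tsum hc).
split=> //; exists u, v, c; do 2!split=> //.
Qed.

Lemma hw_cancel N p u l v : levels_le p (u ++ l :: inv_letter l :: v) N ->
  hw N p (u ++ l :: inv_letter l :: v) (u ++ v).
Proof. by move=> h; apply: (@hw_del _ _ u [:: l; inv_letter l] v) => //; left; exists l. Qed.

Lemma hw_cancelX N p u x v : levels_le p (u ++ x ++ winv x ++ v) N ->
  hw N p (u ++ x ++ winv x ++ v) (u ++ v).
Proof.
elim: x u v => [|l x IH] u v //=; first by move=> _; apply: hw_refl.
have E : u ++ l :: x ++ winv (l :: x) ++ v = (u ++ [:: l]) ++ x ++ winv x ++ (inv_letter l :: v).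
  by rewrite winv_cons -!catA.
rewrite E => h; apply: hw_trans (IH _ _ h) _.
rewrite -catA /=; apply: hw_cancel.
have h' : levels_le p ((u ++ [:: l]) ++ (x ++ winv x) ++ (inv_letter l :: v)) N.
  by rewrite -(catA x).
have := levels_mid h'; rewrite tsum_cat tsum_winv addrN -catA /=; exact.
Qed.

Ltac lev := repeat match goal with |- levels_le _ _ _ => first [ apply: levels_catI | apply: levels_consI | apply: levels_nilI
  | apply: levels_liftI | apply: levels_winvliftI | apply: levels_tPI | apply: levels_tNI ] end.
Ltac tsimp := rewrite ?(tsum_cat, tsum_cons, tsum_nil, tsum_winv, tsum_lift, tsum_tP, tsum_tN); try rewrite /step; rewrite /=.
Ltac levs := rewrite ?winvK; lev; tsimp; lia.

Local Notation t := (None, true).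
Local Notation ti := (None, false).

Definition c0 (a : A) : W :=
  [:: (Some a, true); tlet true A] ++ winv (lift (phi a)) ++ [:: tlet false A].
Lemma c0_cell a : c0 a \in cells R phi.
Proof. by rewrite mem_cat; apply/orP; right; apply/mapP; exists a; rewrite ?mem_enum. Qed.

Lemma push1 N q a b : q + 1 <= N ->
  hw N q [:: (Some a, b); t] (t :: lift (phiw phi [:: (a, b)])).
Proof.
move=> hq; rewrite /phiw /= cats0.
case: b.
- apply: hw_sym; apply: hw_trans (_ : hw N q (c0 a ++ t :: lift (phi a)) _).
    apply: hw_sym; apply: (@hw_del _ _ [::] (c0 a) (t :: lift (phi a))).
      by right; exists (c0 a); [exact: c0_cell | exists 0%N; left; rewrite rot0].
    rewrite /c0 /tlet; levs.
  have -> : c0 a ++ t :: lift (phi a) = ([:: (Some a, true); t] ++ winv (lift (phi a))) ++ ti :: inv_letter ti :: lift (phi a).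
    by rewrite /c0 /tlet -!catA.
  apply: hw_trans (hw_cancel _) _; first by rewrite /c0 /tlet; levs.
  have -> : ([:: (Some a, true); t] ++ winv (lift (phi a))) ++ lift (phi a) =
            [:: (Some a, true); t] ++ winv (lift (phi a)) ++ winv (winv (lift (phi a))) ++ [::].
    by rewrite winvK cats0 catA.
  apply: hw_trans (hw_cancelX _) _; first by levs.
  rewrite ?cats0; exact: hw_refl.
- rewrite lift_winv.
  have Ec : [:: (Some a, false); t] ++ lift (phi a) ++ [:: ti] = rot (size (lift (phi a))).+2 (winv (c0 a)).
    have Ew : winv (c0 a) = ((t :: lift (phi a)) ++ [:: ti]) ++ [:: (Some a, false)].
      by rewrite /c0 !winv_cat winvK -!catA.
    have -> : (size (lift (phi a))).+2 = size ((t :: lift (phi a)) ++ [:: ti]) by rewrite size_cat /= addn1.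
    by rewrite Ew rot_size_cat.
  apply: hw_sym; apply: hw_trans (_ : hw N q (([:: (Some a, false); t] ++ lift (phi a) ++ [:: ti]) ++ t :: winv (lift (phi a))) _).
    apply: hw_sym; apply: (@hw_del _ _ [::] ([:: (Some a, false); t] ++ lift (phi a) ++ [:: ti]) (t :: winv (lift (phi a)))).
      by right; exists (c0 a); [exact: c0_cell | exists (size (lift (phi a))).+2; right].
    levs.
  have -> : ([:: (Some a, false); t] ++ lift (phi a) ++ [:: ti]) ++ t :: winv (lift (phi a)) = ([:: (Some a, false); t] ++ lift (phi a)) ++ ti :: inv_letter ti :: winv (lift (phi a)).
    by rewrite -!catA.
  apply: hw_trans (hw_cancel _) _; first by levs.
  have -> : ([:: (Some a, false); t] ++ lift (phi a)) ++ winv (lift (phi a)) =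
            [:: (Some a, false); t] ++ lift (phi a) ++ winv (lift (phi a)) ++ [::].
    by rewrite cats0 catA.
  apply: hw_trans (hw_cancelX _) _; first by levs.
  rewrite ?cats0; exact: hw_refl.
Qed.


Lemma hw_frameE N p p' u v x y : hw N p' x y -> p' = p + tsum u ->
  levels_le p u N -> levels_le (p + tsum u + tsum x) v N ->
  hw N p (u ++ x ++ v) (u ++ y ++ v).
Proof. by move=> h E; apply: hw_frame; rewrite -E. Qed.

Lemma hw_frameL N p p' u x y : hw N p' x y -> p' = p + tsum u ->
  levels_le p u N -> p + tsum u + tsum x <= N ->
  hw N p (u ++ x) (u ++ y).
Proof.
move=> h E hu hv; have := hw_frameE (v := [::]) h E hu (levels_nilI hv).
by rewrite !cats0.
Qed.

Lemma hw_frameR N p x y v : hw N p x y -> levels_le (p + tsum x) v N -> p <= N ->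
  hw N p (x ++ v) (y ++ v).
Proof.
move=> h hv hp.
have := @hw_frameE N p p [::] v x y h; rewrite tsum_nil addr0 /=.
by apply => //; apply: levels_nilI.
Qed.

Lemma levels_end p N w : levels_le p w N -> p + tsum w <= N.
Proof. by move/(_ (size w) (leqnn _)); rewrite take_size. Qed.

Lemma push_word N q (x : word A) : q + 1 <= N ->
  hw N q (lift x ++ [:: t]) (t :: lift (phiw phi x)).
Proof.
move=> hq; elim: x => [|[a b] x IH]; first exact: (hw_refl _ _ _ _ [:: t]).
have E1 : lift ((a, b) :: x) ++ [:: t] = [:: (Some a, b)] ++ (lift x ++ [:: t]) by [].
rewrite E1; apply: hw_trans (hw_frameL IH _ _ _) _.
- by rewrite tsum_cons tsum_nil /step /= !addr0.
- by levs.
- by levs.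
have E2 : [:: (Some a, b)] ++ t :: lift (phiw phi x) = [:: (Some a, b); t] ++ lift (phiw phi x) by [].
rewrite E2; apply: hw_trans (hw_frameR (push1 _ _ hq) _ _) _; [by levs | by lia |].
by rewrite [phiw phi ((a, b) :: x)]phiw_cons lift_cat; exact: hw_refl.
Qed.

Lemma push_k N q (x : word A) k : q + k%:Z <= N ->
  hw N q (lift x ++ tP k) (tP k ++ lift (iter k (phiw phi) x)).
Proof.
elim: k x q => [|k IH] x q hq; first by rewrite /= cats0; exact: hw_refl.
have E1 : lift x ++ tP k.+1 = (lift x ++ [:: t]) ++ tP k by rewrite -catA.
rewrite E1; apply: hw_trans (hw_frameR (push_word _ _) _ _) _.
- by lia.
- by levs.
- by lia.
have E2 : (t :: lift (phiw phi x)) ++ tP k = [:: t] ++ (lift (phiw phi x) ++ tP k) by [].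
rewrite E2; apply: hw_trans (hw_frameL (IH _ (q + 1) _) _ _ _) _.
- by lia.
- by tsimp.
- by levs.
- by levs.
by rewrite iterSr; exact: hw_refl.
Qed.

Fixpoint sig (M p : int) (w : W) : word A :=
  match w with
  | [::] => [::]
  | l :: w' => match l with
               | (Some a, b) => iter (absz (M - p)%R) (phiw phi) [:: (a, b)] ++ sig M p w'
               | (None, b) => sig M (p + (if b then 1 else -1)) w'
               end
  end.

Lemma push_main N M p w : M <= N -> levels_le p w M ->
  hw N p w (tP (absz (M - p)%R) ++ lift (sig M p w) ++ tN (absz (M - (p + tsum w))%R)).
Proof.
move=> hMN; elim: w p => [|[[a|] b] w IH] p hl.
- have hp := levels_nilE hl.
  rewrite /= tsum_nil addr0 -winv_tP; apply: hw_sym.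
  have := @hw_cancelX N p [::] (tP (absz (M - p)%R)) [::]; rewrite /= cats0; apply.
  by rewrite winv_tP; levs.
- have [hp hw'] := levels_consE hl; rewrite /step /= addr0 in hw'.
  have he := levels_end hw'.
  have E1 : (Some a, b) :: w = [:: (Some a, b)] ++ w by [].
  rewrite E1; apply: hw_trans (hw_frameL (IH _ hw') _ _ _) _.
  + by tsimp; rewrite addr0.
  + by levs.
  + by tsimp; lia.
  rewrite catA.
  have := hw_frameR (push_k [:: (a, b)] (_ : p + (absz (M - p)%R)%:Z <= N)).
  move=> /(_ (lift (sig M p w) ++ tN (absz (M - (p + tsum w))%R))) h.
  apply: hw_trans (h _ _ _) _; first by lia.
    by levs.
    by lia.
  rewrite /= tsum_cons /step /= add0r lift_cat -!catA; exact: hw_refl.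
- have [hp hw'] := levels_consE hl; rewrite /step /= in hw'.
  have he := levels_end hw'.
  have hp1 := levels_nilE (levels_catE (hw' : levels_le _ ([::] ++ w) _)).1.
  have E1 : (None, b) :: w = [:: (None, b)] ++ w by [].
  rewrite E1; apply: hw_trans (hw_frameL (IH _ hw') _ _ _) _.
  + by tsimp; rewrite addr0.
  + by levs.
  + by tsimp; move: he; case: (b) => /=; lia.
  rewrite /= tsum_cons /step /= addrA.
  clear E1; case: b hl hw' he hp1 => /= hl hw' he hp1.
  + have -> : absz (M - p)%R = (absz (M - (p + 1))%R).+1 by lia.
    exact: hw_refl.
  + have -> : absz (M - (p - 1))%R = (absz (M - p)%R).+1 by lia.
    have := @hw_cancel N p [::] (None, false) (tP (absz (M - p)%R) ++ lift (sig M (p - 1) w) ++ tN (absz (M - (p - 1 + tsum w))%R)).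
    rewrite /=; apply; levs.
Qed.

Lemma hw_cellR N q r0 : q <= N -> r0 \in R -> hw N q (lift r0) [::].
Proof.
move=> hq hr; have := @hw_del N q [::] (lift r0) [::]; rewrite /= cats0; apply; last by levs.
right; exists (lift r0); last by exists 0%N; left; rewrite rot0.
by rewrite mem_cat map_f.
Qed.

Lemma hw_cellRinv N q r0 : q <= N -> r0 \in R -> hw N q (lift (winv r0)) [::].
Proof.
move=> hq hr; rewrite lift_winv.
have := @hw_del N q [::] (winv (lift r0)) [::]; rewrite /= cats0; apply; last by levs.
right; exists (lift r0); last by exists 0%N; right; rewrite rot0.
by rewrite mem_cat map_f.
Qed.

Lemma hw_pull N M (j : nat) (x : word A) : M <= N -> (forall q, q <= N -> hw N q (lift x) [::]) ->
  hw N M (lift (iter j (phiw phi) x)) [::].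
Proof.
move=> hM hx.
apply: hw_trans (_ : hw N M (tN j ++ tP j ++ lift (iter j (phiw phi) x)) _).
  apply: hw_sym; have := @hw_cancelX N M [::] (tN j) (lift (iter j (phiw phi) x)).
  by rewrite /= winv_tN; apply; levs.
apply: hw_trans (hw_frameL (hw_sym (@push_k N (M - j%:Z) x j _)) _ _ _) _.
- by lia.
- by tsimp.
- by levs.
- by tsimp; lia.
apply: hw_trans (hw_frameE (hx (M - j%:Z) _) _ _ _) _.
- by lia.
- by tsimp.
- by levs.
- by levs.
have := @hw_cancelX N M [::] (tN j) [::]; rewrite /= cats0 winv_tN; apply; levs.
Qed.

Lemma hw_lift_reduce N M (x : word A) : M <= N -> hw N M (lift x) (lift (reduce x)).
Proof.
move=> hM; elim: x => [|l x IH]; first exact: hw_refl.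
have E1 : lift (l :: x) = [:: (Some l.1, l.2)] ++ lift x by [].
rewrite E1; apply: hw_trans (hw_frameL IH _ _ _) _.
- by tsimp; rewrite addr0.
- by levs.
- by tsimp; lia.
rewrite reduce_cons; case: (reduce x) => [|m r]; first exact: hw_refl.
rewrite /=; case: eqP => [->|_]; last exact: hw_refl.
have := @hw_cancel N M [::] (Some l.1, l.2) (lift r); apply; levs.
Qed.

Lemma hw_N0 N M (v : word A) : M <= N -> N0 R phi v -> hw N M (lift v) [::].
Proof.
move=> hM [s [hs E]].
apply: hw_trans (hw_lift_reduce v hM) _; rewrite E.
apply: hw_trans (hw_sym (hw_lift_reduce _ hM)) _.
elim: s hs {E} => [|e s IH] hs /=; first exact: hw_refl.
rewrite lift_cat; apply: hw_trans (hw_frameL (IH _) _ _ _) _.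
- by move=> e' he'; apply: hs; rewrite inE he' orbT.
- by tsimp; rewrite ?addr0.
- by levs.
- by tsimp; lia.
rewrite cats0.
have hc : hw N M (lift (if e.2 then e.1.2 else winv e.1.2)) [::].
  have [j [r0 hr ->]] := hs e (mem_head _ _).
  case: e.2.
  + by apply: hw_pull => // q hq; apply: hw_cellR.
  + by rewrite -iter_phiw_winv; apply: hw_pull => // q hq; apply: hw_cellRinv.
rewrite !lift_cat lift_winv.
apply: hw_trans (hw_frameE hc _ _ _) _.
- by tsimp; rewrite ?addr0.
- by levs.
- by levs.
have := @hw_cancelX N M [::] (lift e.1.1) [::]; rewrite /= cats0; apply; levs.
Qed.

Definition sigl (M p : int) (l : option A * bool) : word A :=
  if l is (Some a, b) then iter (absz (M - p)%R) (phiw phi) [:: (a, b)] else [::].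

Lemma sig_cons M p l w : sig M p (l :: w) = sigl M p l ++ sig M (p + step l) w.
Proof. by case: l => [[a|] b] //=; rewrite /step /= addr0. Qed.

Lemma sig_cat M p u v : sig M p (u ++ v) = sig M p u ++ sig M (p + tsum u) v.
Proof.
elim: u p => [|l u IH] p; first by rewrite /= tsum_nil addr0.
by rewrite cat_cons !sig_cons IH tsum_cons addrA catA.
Qed.

Lemma iter_phiw_nil k : iter k (phiw phi) [::] = [::].
Proof. by elim: k => //= k ->. Qed.

Lemma sigl_inv M p l : sigl M p (inv_letter l) = winv (sigl M p l).
Proof. by case: l => [[a|] b] //=; rewrite -iter_phiw_winv. Qed.

Lemma sig_winv M p u : sig M (p + tsum u) (winv u) = winv (sig M p u).
Proof.
elim: u p => [|l u IH] p; first by [].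
rewrite winv_cons sig_cat tsum_cons addrA IH [sig M p (l :: u)]sig_cons winv_cat; congr (_ ++ _).
rewrite tsum_winv addrK sig_cons /= cats0.
by case: l => [[a|] b] //=; rewrite /step /= addr0 -iter_phiw_winv.
Qed.

Lemma sig_lift M p (r : word A) : sig M p (lift r) = iter (absz (M - p)%R) (phiw phi) r.
Proof.
elim: r => [|[a b] r IH] /=; first by rewrite iter_phiw_nil.
by rewrite IH -iter_phiw_cat.
Qed.

Lemma sig_shift L (i : nat) p w : levels_le p w L ->
  sig (L + i%:Z) p w = iter i (phiw phi) (sig L p w).
Proof.
elim: w p => [|[[a|] b] w IH] p hl /=; first by rewrite iter_phiw_nil.
- have [hp hw'] := levels_consE hl; rewrite /step /= addr0 in hw'.
  rewrite iter_phiw_cat IH // -iterD; congr (iter _ _ _ ++ _); lia.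
- have [hp hw'] := levels_consE hl; rewrite /step /= in hw'.
  by rewrite IH.
Qed.

Lemma sig_bt M p l v : reduce (sig M p (l :: inv_letter l :: v)) = reduce (sig M p v).
Proof.
rewrite !sig_cons step_inv -addrA subrr addr0.
have -> : sigl M (p + step l) (inv_letter l) = winv (sigl M p l).
  by case: l => [[a|] b] //=; rewrite /step /= addr0 -iter_phiw_winv.
exact: reduce_XX.
Qed.

Lemma sig_red M x p : reduce (sig M p x) = reduce (sig M p (reduce x)).
Proof.
elim: x p => [//|l x IH] p.
have -> : reduce (sig M p (l :: x)) = reduce (sig M p (l :: reduce x)).
  by rewrite !sig_cons !reduce_cat IH.
rewrite reduce_cons; case: (reduce x) => [//|m r] /=.
case: eqP => [->|//]; exact: sig_bt.
Qed.

Lemma sig_reduce M p w1 w2 : reduce w1 = reduce w2 ->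
  reduce (sig M p w1) = reduce (sig M p w2).
Proof. by move=> E; rewrite sig_red E -sig_red. Qed.

Lemma tsum_push (l : option A * bool) (s : W) : tsum (push l s) = step l + tsum s.
Proof.
case: s => [|m s] /=; first by rewrite !tsum_cons tsum_nil.
case: eqP => [->|_]; last by rewrite tsum_cons.
by rewrite tsum_cons step_inv addrA subrr add0r.
Qed.

Lemma tsum_reduce w : tsum (reduce w) = tsum w.
Proof.
elim: w => [//|l w IH]; by rewrite reduce_cons tsum_push IH tsum_cons.
Qed.

Definition cj (X : eqType) (e : word X * word X * bool) : word X :=
  e.1.1 ++ (if e.2 then e.1.2 else winv e.1.2) ++ winv e.1.1.

Lemma tsum_cj (e : W * W * bool) : e.1.2 \in cells R phi -> tsum (cj e) = 0.
Proof.
move=> /cell_tsum h; rewrite /cj !tsum_cat tsum_winv.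
by case: e.2; rewrite ?tsum_winv h ?oppr0 add0r addrN.
Qed.

Lemma loop_tsum w : is_loop R phi w -> tsum w = 0.
Proof.
case=> s [hs E]; rewrite -tsum_reduce E tsum_reduce.
elim: s hs {E} => [|e s IH] hs /=; first exact: tsum_nil.
rewrite tsum_cat (tsum_cj (hs e (mem_head _ _))) IH ?add0r //.
by move=> e' he'; apply: hs; rewrite inE he' orbT.
Qed.

Lemma sig_c0 M q a : q + 1 <= M -> sig M q (c0 a) =
  iter (absz (M - q)%R) (phiw phi) [:: (a, true)] ++
  winv (iter (absz (M - q)%R) (phiw phi) [:: (a, true)]).
Proof.
move=> hq; rewrite /c0 /tlet !sig_cat.
have -> : sig M (q + tsum [:: (Some a, true); t]) (winv (lift (phi a))) =
          winv (sig M (q + 1) (lift (phi a))).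
  by have := sig_winv M (q + 1) (lift (phi a)); rewrite tsum_lift addr0 => <-; tsimp; rewrite !addr0.
rewrite sig_lift /= cats0.
have -> : phi a = phiw phi [:: (a, true)] by rewrite /phiw /= cats0.
rewrite -iterSr.
have -> : (absz (M - (q + 1))%R).+1 = absz (M - q)%R by lia.
by rewrite cats0.
Qed.

Lemma sig_conj_N0 M p (s : seq (W * W * bool)) :
  (forall e, e \in s -> e.1.2 \in cells R phi) ->
  (forall e, e \in s -> p + tsum e.1.1 + 1 <= M) ->
  exists s' : seq (word A * word A * bool),
    (forall e, e \in s' -> exists j, exists2 r0, r0 \in R & e.1.2 = iter j (phiw phi) r0) /\
    reduce (sig M p (flatten (map (@cj _) s))) = reduce (flatten (map (@cj _) s')).
Proof.
elim: s => [|e s IH] hc hl; first by exists [::].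
have sub : forall e', e' \in s -> e' \in e :: s by move=> e' he'; rewrite inE he' orbT.
have [s0 [hs0 E0]] := IH (fun e' he' => hc e' (sub e' he')) (fun e' he' => hl e' (sub e' he')).
have hce := hc e (mem_head _ _); have hle := hl e (mem_head _ _).
rewrite /= sig_cat (tsum_cj hce) addr0.
have Ecj : sig M p (cj e) = sig M p e.1.1 ++
    (if e.2 then sig M (p + tsum e.1.1) e.1.2 else winv (sig M (p + tsum e.1.1) e.1.2))
    ++ winv (sig M p e.1.1).
  rewrite /cj !sig_cat; congr (_ ++ _).
  have ht : tsum (if e.2 then e.1.2 else winv e.1.2) = 0.
    by case: e.2; rewrite ?tsum_winv (cell_tsum hce) ?oppr0.
  rewrite ht addr0 sig_winv; congr (_ ++ _).
  case: e.2 => //.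
  by have := sig_winv M (p + tsum e.1.1) e.1.2; rewrite (cell_tsum hce) addr0.
move: hce; rewrite mem_cat => /orP [/mapP [r0 hr0 Ec] | /mapP [a _ Ec]].
- rewrite Ec sig_lift in Ecj.
  exists ((sig M p e.1.1, iter (absz (M - (p + tsum e.1.1))%R) (phiw phi) r0, e.2) :: s0).
  split.
    move=> e'; rewrite inE => /orP [/eqP -> | /hs0 //].
    by exists (absz (M - (p + tsum e.1.1))%R), r0.
  by rewrite Ecj /= /cj /=; apply: reduce_catr.
- have Ec' : e.1.2 = c0 a by rewrite Ec.
  rewrite Ec' sig_c0 in Ecj; last exact: hle.
  set X := iter _ _ _ in Ecj.
  have EX : (if e.2 then X ++ winv X else winv (X ++ winv X)) = X ++ winv X.
    by case: e.2; rewrite // winv_cat winvK.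
  rewrite EX in Ecj; exists s0; split => //.
  rewrite Ecj -!catA reduce_cat.
  have -> : reduce (X ++ winv X ++ winv (sig M p e.1.1) ++ sig M p (flatten (map (@cj _) s)))
          = reduce (winv (sig M p e.1.1) ++ sig M p (flatten (map (@cj _) s))) by rewrite reduce_XX.
  by rewrite -reduce_cat reduce_XX.
Qed.

Lemma levels_mono p w L M : levels_le p w L -> L <= M -> levels_le p w M.
Proof. by move=> h hLM k hk; apply: le_trans (h k hk) hLM. Qed.

Lemma main_sec (B : nat) : bounded_depth R phi B ->
  forall (p L : int) (w : W), is_loop R phi w -> levels_le p w L ->
    hw (L + B%:Z) p w [::].
Proof.
move=> bd p L w hloop hlev.
have hp : p <= L by have := hlev 0%N isT; rewrite take0 tsum_nil addr0.
have ht := loop_tsum hloop.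
have hinf : Ninf R phi (sig L p w).
  case: hloop => s [hs E].
  have [M0 hM0] : exists M0 : int, forall e, e \in s -> p + tsum e.1.1 + 1 <= M0.
    elim: s {hs E} => [|e s [M1 h]]; first by exists 0.
    exists ((absz M1)%:Z + (absz (p + tsum e.1.1 + 1)%R)%:Z) => e'.
    rewrite inE => /orP [/eqP -> | /h hz]; set x := (p + tsum e.1.1 + 1)%R.
      by clearbody x; lia.
    by apply: le_trans hz _; clearbody x; lia.
  exists (absz (M0 - L)%R); rewrite -sig_shift //.
  have hM : M0 <= L + (absz (M0 - L)%R)%:Z by lia.
  have [s' [hs' E']] := @sig_conj_N0 (L + (absz (M0 - L)%R)%:Z) p s hs
     (fun e he => le_trans (hM0 e he) hM).
  exists s'; split => //; rewrite (sig_reduce _ _ E); exact: E'.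
have [i hi hN0] := bd _ hinf.
rewrite -sig_shift // in hN0.
have hMN : L + i%:Z <= L + B%:Z by lia.
have hlevM : levels_le p w (L + i%:Z) by apply: levels_mono hlev _; lia.
apply: hw_trans (push_main hMN hlevM) _; rewrite ht addr0.
apply: hw_trans (hw_frameE (hw_N0 hMN hN0) _ _ _) _.
- by tsimp; lia.
- by levs.
- by levs.
have := @hw_cancelX (L + B%:Z) p [::] (tP (absz (L + i%:Z - p)%R)) [::].
rewrite /= cats0 winv_tP; apply; levs.
Qed.
End Hom.

Theorem lemma5p9 (A : finType) (R : seq (word A)) (phi : A -> word A) (B : nat) :
  bounded_depth R phi B ->
  forall (p L : int) (w : word (option A)),
    is_loop R phi w ->
    levels_le p w L ->
    homotopic_within R phi (L + B%:Z) p w [::].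
Proof. exact: main_sec. Qed.
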